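(* Let $\mathcal{G}$ be a parity game with a nonempty vertex set and let $T$ be a finite set of tangles of $\mathcal{G}$. Then $\mathtt{search}(\mathcal{G},T)$ (defined in the context) terminates and returns a pair $(T'',t)$ where $t$ is a tangle that is a dominion of $\mathcal{G}$ for the player $\alpha\equiv\mathrm{pr}(t)\pmod 2$.
   Context: Parity games: $\mathcal{G}=(V_0,V_1,E,\mathrm{pr})$, $V=V_0\cup V_1$ finite, partitioned into vertices of Even ($0$) and Odd ($1$); $E\subseteq V\times V$ with every vertex having a successor; $\mathrm{pr}:V\to\{0,\dots,d\}$. $E(u)=\{v:(u,v)\in E\}$, $\mathrm{pr}(U)=\max_{u\in U}\mathrm{pr}(u)$, $\mathrm{pr}^{-1}(p)$ the set of vertices of priority $p$, $\overline{\alpha}=1-\alpha$. A play (infinite path) is won by Even iff the highest priority occurring infinitely often is even, otherwise by Odd; a cycle is won by $\alpha$ if its highest priority has parity $\alpha$. A strategy of $\alpha$ is a partial function $\sigma$ on $V_\alpha$ with $\sigma(v)\in E(v)$; a play is consistent with $\sigma$ if every vertex $v\in\mathrm{dom}(\sigma)$ on it is followed by $\sigma(v)$. A dominion of $\alpha$ is a set $D$ for which $\alpha$ has a strategy $\sigma$ such that all plays starting in $D$ consistent with $\sigma$ stay in $D$ and are won by $\alpha$. For $U\subseteq V$, $\mathcal{G}\cap U$ is the subgame with vertices $V\cap U$ and edges $E\cap(U\times U)$, and $\mathcal{G}\setminus U=\mathcal{G}\cap(V\setminus U)$. A $p$-tangle is a nonempty $U\subseteq V$ with $p=\mathrm{pr}(U)$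 such that for $\alpha\equiv p\pmod 2$ there is a strategy $\sigma:U\cap V_\alpha\to U$ (witness strategy $\sigma_T(U)$) with $(U,E\cap(\sigma\cup((U\cap V_{\overline{\alpha}})\times U)))$ strongly connected and all its cycles won by $\alpha$ (''won by $\alpha$''). For a tangle $t$ won by $\alpha$ in a game with edge set $E$, $E_T(t)=\{v\notin t:\exists u\in t\cap V_{\overline{\alpha}},(u,v)\in E\}$. $T_\alpha$ denotes the tangles of $T$ won by $\alpha$; for a subgame $\mathcal{G}'$, $T\cap\mathcal{G}'$ denotes the tangles of $T$ contained in its vertex set. Tangle attractor: for a game $\mathcal{G}$ with vertices $V$, tangles $T$, player $\alpha$ and $A\subseteq V$, $\mathit{TAttr}^{\mathcal{G},T}_\alpha(A)$ is the least $Z\supseteq A$ containing every $v\in V_\alpha$ with $E(v)\cap Z\neq\emptyset$, every $v\in V_{\overline{\alpha}}$ with $E(v)\subseteq Z$, and every vertex of every $t\in T_\alpha$ with $\emptyset\neq E_T(t)\subseteq Z$ ($E_T$ computed in $\mathcal{G}$). It is computed iteratively together with a strategy $\sigma$ of $\alpha$ (initially empty): when an $\alpha$-vertex is added individually, $\sigma$ maps it to a successor already in $Z$; each $\alpha$-vertex of $A$ gets as $\sigma$-value a successor in $Z$ once one exists; when the vertices of a tangle $t$ are added, $\sigma(u):=\sigma_T(t)(u)$ for every $\alpha$-vertex $u\in t$ not yet in $\mathrm{dom}(\sigma)$. extract-tangles$(Z,\sigma)$, for a subgame $\mathcal{G}'=(V',E')$ with top priority $p$, $\alpha\equiv p$,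 region $Z\subseteq V'$ and strategy $\sigma$: let $Y_Z$ be the greatest $X\subseteq Z$ such that every $v\in X\cap V_{\overline{\alpha}}$ has $E'(v)\subseteq X$ and every $v\in X\cap V_\alpha$ has $\sigma(v)\in X$; let $H$ be the graph on $Y_Z$ with edges $(v,\sigma(v))$ for $v\in Y_Z\cap V_\alpha$ and $(v,w)\in E'$ for $v\in Y_Z\cap V_{\overline{\alpha}}$; return all bottom strongly connected components of $H$ that contain at least one edge of $H$, each with witness strategy $\sigma$ restricted to it. $\mathtt{search}(\mathcal{G},T)$: repeat forever: set $r:=\emptyset$ (a partial function $V\to\mathbb{N}$, the region function) and $Y:=\emptyset$; while $V\setminus\mathrm{dom}(r)\neq\emptyset$: let $\mathcal{G}':=\mathcal{G}\setminus\mathrm{dom}(r)$ with vertex set $V'$, $T':=T\cap\mathcal{G}'$, $p:=\mathrm{pr}(\mathcal{G}')$, $\alpha:=p\bmod 2$; compute $(Z,\sigma):=\mathit{TAttr}^{\mathcal{G}',T'}_\alpha(\mathrm{pr}^{-1}(p)\cap V')$ (the region of priority $p$); let $A:=$ extract-tangles$(Z,\sigma)$; if some $t\in A$ has $E_T(t)=\emptyset$ with $E_T$ computed in the full game $\mathcal{G}$, return $(T\cup Y,t)$; otherwise set $r(v):=p$ for all $v\in Z$ and $Y:=Y\cup A$. After the while-loop, set $T:=T\cup Y$. *)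

(* Defs.v *)
From Stdlib Require Import Relations.
From mathcomp Require Import all_boot.
Set Implicit Arguments. Unset Strict Implicit. Unset Printing Implicit Defensive.

Section ParityGames.
(* owner v = false : v belongs to Even (player 0); true : to Odd (player 1).
   A player is a bool; the player "alpha = p mod 2" is [odd p]. *)
Variables (V : finType) (owner : V -> bool) (E : rel V) (pr : V -> nat).

Definition strat := {ffun V -> option V}.
(* a tangle together with its witness strategy sigma_T(t) *)
Definition tangle := ({set V} * strat)%type.

Definition prs (U : {set V}) : nat := \max_(v in U) pr v.
Definition tpl (t : tangle) : bool := odd (prs t.1).

Definition tgraph (U : {set V}) (s : strat) : rel V :=
  fun v w => [&& v \in U, w \in U &
     if owner v == odd (prs U) then s v == Some w else E v w].

Definition is_tangle (t : tangle) : Prop :=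
  let U := t.1 in let s := t.2 in let a := odd (prs U) in
  [/\ U != set0,
      (forall v, v \in U -> owner v = a -> exists2 w, s v = Some w & (w \in U) && E v w),
      (forall v w, s v = Some w -> v \in U /\ owner v = a),
      (forall u v, u \in U -> v \in U -> connect (tgraph U s) u v) &
      (forall c : seq V, c != [::] -> cycle (tgraph U s) c ->
         odd (\max_(v <- c) pr v) = a)].

(* E_T(t) computed in the (sub)game with vertex set W (edges E cap W x W) *)
Definition escapes (W : {set V}) (t : tangle) : {set V} :=
  [set v in W | (v \notin t.1) && [exists u in t.1, (owner u != tpl t) && E u v]].

Definition valid_strat (a : bool) (s : strat) : Prop :=
  forall v w, s v = Some w -> owner v = a /\ E v w.
Definition is_play (p : nat -> V) : Prop := forall i, E (p i) (p i.+1).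
Definition consistent (s : strat) (p : nat -> V) : Prop :=
  forall i w, s (p i) = Some w -> p i.+1 = w.
Definition inf_often (p : nat -> V) (q : nat) : Prop :=
  forall n, exists2 m, n <= m & pr (p m) = q.
Definition won_by (a : bool) (p : nat -> V) : Prop :=
  exists q, [/\ inf_often p q, (forall q', inf_often p q' -> q' <= q) & odd q = a].
Definition dominion (a : bool) (D : {set V}) : Prop :=
  exists s : strat, valid_strat a s /\
    forall p, is_play p -> p 0 \in D -> consistent s p ->
      (forall i, p i \in D) /\ won_by a p.

Definition upd (s : strat) (v w : V) : strat :=
  [ffun x => if x == v then Some w else s x].
Definition merge (s st : strat) (U : {set V}) : strat :=
  [ffun x => if (s x == None) && (x \in U) then st x else s x].

(* One step of computing TAttr^{G',T'}_a(A) together with sigma, where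
   G' has vertex set W and Tp = T' are the tangles contained in W. *)
Inductive attr_step (W : {set V}) (Tp : {set tangle}) (a : bool) (A : {set V}) :
    {set V} * strat -> {set V} * strat -> Prop :=
| AS_pl (Z : {set V}) (s : strat) v w : v \in W -> v \notin Z -> owner v = a -> E v w -> w \in Z ->
    attr_step W Tp a A (Z, s) (v |: Z, upd s v w)
| AS_op (Z : {set V}) (s : strat) v : v \in W -> v \notin Z -> owner v = ~~ a ->
    (forall w, w \in W -> E v w -> w \in Z) ->
    attr_step W Tp a A (Z, s) (v |: Z, s)
| AS_tg (Z : {set V}) (s : strat) t : t \in Tp -> tpl t = a -> escapes W t != set0 ->
    escapes W t \subset Z -> ~~ (t.1 \subset Z) ->
    attr_step W Tp a A (Z, s) (Z :|: t.1, merge s t.2 t.1)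
| AS_base (Z : {set V}) (s : strat) v w : v \in A -> owner v = a -> s v = None -> w \in W -> E v w ->
    w \in Z -> attr_step W Tp a A (Z, s) (Z, upd s v w).

Definition closed_reg (W : {set V}) (a : bool) (s : strat) (X : {set V}) : bool :=
  [forall v in X, if owner v == a then (if s v is Some w then w \in X else false)
                  else [forall w in W, E v w ==> (w \in X)]].
Definition core (W : {set V}) (a : bool) (s : strat) (Z : {set V}) : {set V} :=
  \bigcup_(X : {set V} | (X \subset Z) && closed_reg W a s X) X.
Definition hgraph (W : {set V}) (a : bool) (s : strat) (Y : {set V}) : rel V :=
  fun v w => [&& v \in Y, w \in Y &
    if owner v == a then s v == Some w else E v w && (w \in W)].
Definition bscc (e : rel V) (C : {set V}) : bool :=
  [exists v in C, C == [set w | connect e v w && connect e w v]] &&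
  [forall x in C, forall y, e x y ==> (y \in C)].
Definition restrict (s : strat) (C : {set V}) : strat :=
  [ffun x => if x \in C then s x else None].
Definition extract (W : {set V}) (a : bool) (s : strat) (Z : {set V}) : {set tangle} :=
  let H := hgraph W a s (core W a s Z) in
  (fun C => (C, restrict s C)) @:
    [set C : {set V} | bscc H C & [exists v in C, exists w in C, H v w]].

(* the region function r is represented by its domain R *)
Inductive sstate :=
| SLoop of {set tangle} & {set tangle} & {set V}                  (* T, Y, dom r *)
| SAttr of {set tangle} & {set tangle} & {set V} & {set V} & strat (* T, Y, dom r, Z, sigma *)
| SDone of {set tangle} & tangle.                                 (* returned (T'', t) *)

Definition subT (T : {set tangle}) (R : {set V}) : {set tangle} :=
  [set t in T | t.1 \subset ~: R].
Definition sub_pl (R : {set V}) : bool := odd (prs (~: R)).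
Definition sub_base (R : {set V}) : {set V} :=
  [set v in ~: R | pr v == prs (~: R)].
Definition astep (T : {set tangle}) (R : {set V}) :=
  attr_step (~: R) (subT T R) (sub_pl R) (sub_base R).

Inductive search_step : sstate -> sstate -> Prop :=
| SS_start T Y R : ~: R != set0 ->
    search_step (SLoop T Y R) (SAttr T Y R (sub_base R) [ffun _ => None])
| SS_round T Y R : ~: R == set0 ->
    search_step (SLoop T Y R) (SLoop (T :|: Y) set0 set0)
| SS_attr T Y R Z s Z' s' : astep T R (Z, s) (Z', s') ->
    search_step (SAttr T Y R Z s) (SAttr T Y R Z' s')
| SS_return T Y R Z s t : (forall zs, ~ astep T R (Z, s) zs) ->
    t \in extract (~: R) (sub_pl R) s Z -> escapes setT t == set0 ->
    search_step (SAttr T Y R Z s) (SDone (T :|: Y) t)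
| SS_next T Y R Z s : (forall zs, ~ astep T R (Z, s) zs) ->
    (forall t, t \in extract (~: R) (sub_pl R) s Z -> escapes setT t != set0) ->
    search_step (SAttr T Y R Z s)
                (SLoop T (Y :|: extract (~: R) (sub_pl R) s Z) (R :|: Z)).

Definition is_done (st : sstate) : Prop :=
  match st with SDone _ _ => True | _ => False end.

End ParityGames.

(* Main.v *)
Require Import Defs.
From Stdlib Require Import Relations.
From mathcomp Require Import all_boot.
From Stdlib Require Import Classical ClassicalEpsilon.
Set Implicit Arguments. Unset Strict Implicit. Unset Printing Implicit Defensive.

Section Gen.
Variable V : finType.

Lemma path_stay (K : rel V) (N P : pred V) :
  (forall x y, K x y -> x \notin N -> y \in N -> P x) ->
  forall l u, path K u l -> u \notin N -> (forall x, x \in u :: l -> ~~ P x) ->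
  all (fun z => z \notin N) l.
Proof.
move=> h2; elim=> [|y l IH] u //= /andP[Kuy pl] uN hP.
have yN : y \notin N.
  apply/negP=> yN; have := hP u; rewrite inE eqxx => /(_ isT); by rewrite (h2 _ _ Kuy uN yN).
rewrite yN /=; apply: (IH y pl yN) => x xin; apply: hP; by rewrite inE xin orbT.
Qed.

Lemma cyc_split (K K' : rel V) (N P : pred V) c :
  (forall x y, K' x y -> x \notin N -> y \notin N -> K x y || P x) ->
  (forall x y, K' x y -> x \notin N -> y \in N -> P x) ->
  cycle K' c -> has P c \/ (all (fun z => z \notin N) c /\ cycle K c) \/ all N c.
Proof.
move=> h1 h2 cc.
case hPc: (has P c); first by left.
right; move/negbT: hPc => /hasPn hPc.
case hN: (all N c); first by right.
left; move/negbT: hN; rewrite -has_predC => /hasP [x xc /= xN].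
have allc : all (fun z => z \notin N) c.
  case: (rot_to xc) => i s' es.
  have := cc; rewrite -(rot_cycle i) es /= rcons_path => /andP[pth _].
  have := path_stay h2 pth xN.
  have hP' : forall z, z \in x :: s' -> ~~ P z.
    by move=> z; rewrite -es mem_rot => /hPc.
  move/(_ hP') => al.
  apply/allP=> z; rewrite -(mem_rot i) es inE => /orP[/eqP->//|zs].
  exact: (allP al z).
split=> //.
apply: (sub_in_cycle (P := [pred z | (z \notin N) && ~~ P z])) cc; last first.
  by apply/allP=> z zc /=; rewrite (allP allc z zc) hPc.
move=> u v /andP[uN uP] /andP[vN _] /= Kuv.
by have := h1 _ _ Kuv uN vN; rewrite (negbTE uP) orbF.
Qed.

Lemma cycle_mem_src (K : rel V) c x : cycle K c -> x \in c -> K x (next c x).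
Proof. by move=> cc xc; apply: next_cycle. Qed.

Lemma max_eq (pr : V -> nat) (c : seq V) m x :
  (forall y, y \in c -> pr y <= m) -> x \in c -> pr x = m -> \max_(y <- c) pr y = m.
Proof.
move=> hle xc px; apply/eqP; rewrite eqn_leq; apply/andP; split.
  by apply/bigmax_leqP_seq => y yc _; apply: hle.
by rewrite -px; apply: (leq_bigmax_seq (P := xpredT)).
Qed.

End Gen.

Section Game.
Variables (V : finType) (owner : V -> bool) (E : rel V) (pr : V -> nat).

Definition Kg (R Z : {set V}) (s : strat V) : rel V := fun x y =>
  [&& x \in Z, y \in Z & if owner x == sub_pl pr R then s x == Some y
                         else E x y && (y \in ~: R)].

Record AInv (R Z : {set V}) (s : strat V) : Prop := {
  ai_Z : Z \subset ~: R;
  ai_A : sub_base pr R \subset Z;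
  ai_s : forall x y, s x = Some y -> [/\ x \in Z, owner x = sub_pl pr R, E x y & y \in Z];
  ai_def : forall x, x \in Z -> owner x = sub_pl pr R -> s x = None -> x \in sub_base pr R;
  ai_cl : forall x, x \in Z -> owner x != sub_pl pr R -> x \notin sub_base pr R ->
            forall y, y \in ~: R -> E x y -> y \in Z;
  ai_cyc : forall c, c != [::] -> cycle (Kg R Z s) c -> odd (\max_(x <- c) pr x) = sub_pl pr R
}.

Lemma pr_le R x : x \in ~: R -> pr x <= prs pr (~: R).
Proof. by move=> xR; rewrite /prs; apply: (leq_bigmax_cond (P := mem (~: R))). Qed.

Lemma in_base R x : (x \in sub_base pr R) = (x \in ~: R) && (pr x == prs pr (~: R)).
Proof. by rewrite /sub_base inE. Qed.

Lemma good_has R c : (forall x, x \in c -> x \in ~: R) -> has (mem (sub_base pr R)) c ->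
  odd (\max_(x <- c) pr x) = sub_pl pr R.
Proof.
move=> hW /hasP [x xc]; rewrite /= in_base => /andP[_ /eqP px].
rewrite (@max_eq _ pr c (prs pr (~: R)) x) //.
by move=> y /hW; apply: pr_le.
Qed.

Lemma Kg_src R Z s c x : cycle (Kg R Z s) c -> x \in c -> x \in Z.
Proof. by move=> cc xc; have /and3P[] := cycle_mem_src cc xc. Qed.

Lemma all1_cycle (K : rel V) v c : c != [::] -> all (pred1 v) c -> cycle K c -> K v v.
Proof.
case: c => [//|x c] _ al cc.
have xv : x = v by have /andP[/eqP] := al.
subst x.
have := cycle_mem_src cc (mem_head v c).
have : next (v :: c) v \in v :: c by rewrite mem_next mem_head.
by move=> /(allP al) /eqP ->.
Qed.

End Game.

Section Pres.
Variables (V : finType) (owner : V -> bool) (E : rel V) (pr : V -> nat).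

Local Notation Kg := (Kg owner E pr).
Local Notation AInv := (AInv owner E pr).

Lemma cyc_finish (R Z' : {set V}) (s' : strat V) (K : rel V) (N : pred V) (c : seq V) :
  Z' \subset ~: R -> c != [::] -> cycle (Kg R Z' s') c ->
  (has (mem (sub_base pr R)) c \/ (all (fun z => z \notin N) c /\ cycle K c) \/ all N c) ->
  (cycle K c -> odd (\max_(x <- c) pr x) = sub_pl pr R) ->
  (all N c -> odd (\max_(x <- c) pr x) = sub_pl pr R) ->
  odd (\max_(x <- c) pr x) = sub_pl pr R.
Proof.
move=> sZ cn cc [hP|[[_ cK]|aN]] h1 h2; [|exact: h1|exact: h2].
apply: good_has hP => x xc; apply: (subsetP sZ); exact: Kg_src cc xc.
Qed.

Lemma pres_pl R Z s v w :
  AInv R Z s -> v \in ~: R -> v \notin Z -> owner v = sub_pl pr R -> E v w -> w \in Z ->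
  AInv R (v |: Z) (upd s v w).
Proof.
move=> [hZ hA hs hdef hcl hcyc] vW vZ ov Evw wZ.
have sZ : Z \subset v |: Z by apply/subsetP=> x xZ; rewrite inE xZ orbT.
have hs' : forall x y, upd s v w x = Some y ->
   [/\ x \in v |: Z, owner x = sub_pl pr R, E x y & y \in v |: Z].
  move=> x y; rewrite /upd ffunE; case: (x =P v) => [-> [<-]|_ /hs [xZ ox Exy yZ]].
    by rewrite !inE eqxx wZ orbT.
  by rewrite !inE xZ yZ !orbT.
split=> //.
- by apply/subsetP=> x; rewrite in_setU1 => /orP[/eqP->//|/(subsetP hZ)].
- exact: subset_trans hA sZ.
- move=> x; rewrite in_setU1 /upd ffunE; case: (x =P v) => [//|_] /= xZ ox sx.
  exact: hdef xZ ox sx.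
- move=> x; rewrite in_setU1 => /orP[/eqP->|xZ]; first by rewrite ov eqxx.
  move=> ox xA y yW Exy; rewrite inE (hcl x xZ ox xA y yW Exy) orbT //.
- move=> c cn cc.
  have sZ' : v |: Z \subset ~: R.
    by apply/subsetP=> x; rewrite in_setU1 => /orP[/eqP->//|/(subsetP hZ)].
  apply: (cyc_finish (K := Kg R Z s) (N := pred1 v) sZ' cn cc).
  + apply: cyc_split cc.
    * move=> x y /and3P[xZ' yZ' e] xv yv.
      rewrite !inE in xv yv; rewrite !in_setU1 (negbTE xv) (negbTE yv) /= in xZ' yZ' *.
      apply/orP; left; apply/and3P; split=> //.
      by move: e; rewrite /upd ffunE (negbTE xv).
    * move=> x y /and3P[xZ' yZ' e] xv /eqP yv; subst y.
      rewrite !inE in xv; rewrite !in_setU1 (negbTE xv) /= in xZ' *.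
      move: e; rewrite /upd ffunE (negbTE xv).
      case: ifP => oxa.
        by move=> /eqP /hs [_ _ _ vZ']; rewrite vZ' in vZ.
      move=> /andP[Exv _]; apply/negPn/negP => xA.
      by have := hcl x xZ' (negbT oxa) xA v vW Exv; rewrite (negbTE vZ).
  + exact: hcyc cn.
  + move=> aN; have := all1_cycle cn aN cc.
    rewrite /Kg /upd ffunE eqxx ov eqxx => /and3P[_ _ /eqP [wv]].
    by subst w; rewrite wZ in vZ.
Qed.


Lemma pres_op R Z s v :
  AInv R Z s -> v \in ~: R -> v \notin Z -> owner v = ~~ sub_pl pr R ->
  (forall w, w \in ~: R -> E v w -> w \in Z) ->
  AInv R (v |: Z) s.
Proof.
move=> [hZ hA hs hdef hcl hcyc] vW vZ ov hv.
have sZ : Z \subset v |: Z by apply/subsetP=> x xZ; rewrite in_setU1 xZ orbT.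
have ova : owner v != sub_pl pr R by rewrite ov; case: (sub_pl pr R).
split=> //.
- by apply/subsetP=> x; rewrite in_setU1 => /orP[/eqP->//|/(subsetP hZ)].
- exact: subset_trans hA sZ.
- move=> x y /hs [xZ ox Exy yZ]; by split=> //; apply: (subsetP sZ).
- move=> x; rewrite in_setU1 => /orP[/eqP->|xZ]; first by move=> ov'; rewrite ov' eqxx in ova.
  exact: hdef xZ.
- move=> x; rewrite in_setU1 => /orP[/eqP->|xZ] ox xA y yW Exy.
    by apply: (subsetP sZ); apply: hv.
  by apply: (subsetP sZ); apply: (hcl x xZ ox xA y yW Exy).
- move=> c cn cc.
  have sZ' : v |: Z \subset ~: R.
    by apply/subsetP=> x; rewrite in_setU1 => /orP[/eqP->//|/(subsetP hZ)].
  apply: (cyc_finish (K := Kg R Z s) (N := pred1 v) sZ' cn cc).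
  + apply: cyc_split cc.
    * move=> x y /and3P[xZ' yZ' e] xv yv.
      rewrite !inE in xv yv; rewrite !in_setU1 (negbTE xv) (negbTE yv) /= in xZ' yZ'.
      by apply/orP; left; apply/and3P; split.
    * move=> x y /and3P[xZ' yZ' e] xv /eqP yv; subst y.
      rewrite !inE in xv; rewrite !in_setU1 (negbTE xv) /= in xZ'.
      move: e; case: ifP => oxa.
        by move=> /eqP /hs [_ _ _ vZ']; rewrite vZ' in vZ.
      move=> /andP[Exv _]; apply/negPn/negP => xA.
      by have := hcl x xZ' (negbT oxa) xA v vW Exv; rewrite (negbTE vZ).
  + exact: hcyc cn.
  + move=> aN; have := all1_cycle cn aN cc.
    rewrite /Kg (negbTE ova) => /and3P[_ _ /andP[Evv _]].
    by have := hv v vW Evv; rewrite (negbTE vZ).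
Qed.

Lemma pres_base R Z s v w :
  AInv R Z s -> v \in sub_base pr R -> owner v = sub_pl pr R -> s v = None ->
  w \in ~: R -> E v w -> w \in Z ->
  AInv R Z (upd s v w).
Proof.
move=> [hZ hA hs hdef hcl hcyc] vA ov sv wW Evw wZ.
have vZ : v \in Z by apply: (subsetP hA).
split=> //.
- move=> x y; rewrite /upd ffunE; case: (x =P v) => [-> [<-]|_ /hs //]; by split.
- move=> x xZ ox; rewrite /upd ffunE; case: (x =P v) => [->//|_]; exact: hdef.
- move=> c cn cc.
  apply: (cyc_finish (K := Kg R Z s) (N := pred0) hZ cn cc).
  + apply: cyc_split cc => // x y /and3P[xZ yZ e] _ _.
    case: (x =P v) => [->|xv]; first by apply/orP; right.
    by move: e; rewrite /upd ffunE; case: (x =P v) => // _ e; rewrite /Kg xZ yZ e.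
  + exact: hcyc cn.
  + by case: c cn {cc}.
Qed.


Lemma tangleP (t : tangle V) : is_tangle owner E pr t ->
  [/\ t.1 != set0,
      (forall v, v \in t.1 -> owner v = tpl pr t -> exists2 w, t.2 v = Some w & (w \in t.1) && E v w),
      (forall v w, t.2 v = Some w -> v \in t.1 /\ owner v = tpl pr t),
      (forall u v, u \in t.1 -> v \in t.1 -> connect (tgraph owner E pr t.1 t.2) u v) &
      (forall c : seq V, c != [::] -> cycle (tgraph owner E pr t.1 t.2) c ->
         odd (\max_(v <- c) pr v) = tpl pr t)].
Proof. by []. Qed.

Lemma pres_tg R Z s (t : tangle V) :
  AInv R Z s -> is_tangle owner E pr t -> tpl pr t = sub_pl pr R -> t.1 \subset ~: R ->
  escapes owner E pr (~: R) t \subset Z ->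
  AInv R (Z :|: t.1) (Defs.merge s t.2 t.1).
Proof.
move=> [hZ hA hs hdef hcl hcyc] /tangleP [tn t2 t3 t4 t5] tpa tW esc.
rewrite tpa in t2 t3 t5.
have sZ : Z \subset Z :|: t.1 by apply: subsetUl.
have mE x : Defs.merge s t.2 t.1 x = if (s x == None) && (x \in t.1) then t.2 x else s x.
  by rewrite /Defs.merge ffunE.
split.
- by rewrite subUset hZ tW.
- exact: subset_trans hA sZ.
- move=> x y; rewrite mE; case: ifP => [/andP[_ xt] /[dup] txy /t3 [_ ox]|_ /hs [xZ ox Exy yZ]].
    have [w tw /andP[wt Exw]] := t2 x xt ox.
    rewrite tw in txy; case: txy => <-.
    by split=> //; rewrite inE ?xt ?wt orbT.
  by split=> //; apply: (subsetP sZ).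
- move=> x xZ' ox; rewrite mE; case: ifP => [/andP[_ xt]|].
    by have [w -> _] := t2 x xt ox.
  move=> h sx; move: h; rewrite sx eqxx /= => xt.
  move: xZ'; rewrite inE xt orbF => xZ; exact: hdef.
- move=> x; rewrite inE => /orP[xZ|xt] ox xA y yW Exy.
    by apply: (subsetP sZ); apply: (hcl x xZ ox xA y yW Exy).
  case yt: (y \in t.1); first by rewrite inE yt orbT.
  apply: (subsetP sZ); apply: (subsetP esc).
  rewrite /escapes inE yW yt /=; apply/existsP; exists x; rewrite xt Exy /= tpa andbT //.
- move=> c cn cc.
  have sZ' : Z :|: t.1 \subset ~: R by rewrite subUset hZ tW.
  pose N := [pred x | (x \in t.1) && (x \notin Z)].
  apply: (cyc_finish (K := Kg R Z s) (N := N) sZ' cn cc).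
  + apply: cyc_split cc.
    * move=> x y /and3P[xZ' yZ' e] xN yN.
      have xZ : x \in Z.
        move: xZ'; rewrite inE => /orP[//|xt].
        by move: xN; rewrite inE /= xt /= negbK.
      have yZ : y \in Z.
        move: yZ'; rewrite inE => /orP[//|yt].
        by move: yN; rewrite inE /= yt /= negbK.
      move: e; rewrite mE; case: ifP => oxa.
        case: ifP => [/andP[/eqP sx _] _|_ e].
          apply/orP; right; exact: hdef xZ (eqP oxa) sx.
        by apply/orP; left; rewrite /Kg xZ yZ oxa e.
      by move=> e; apply/orP; left; rewrite /Kg xZ yZ oxa e.
    * move=> x y /and3P[xZ' yZ' e] xN /andP[yt yZ].
      have xZ : x \in Z.
        move: xZ'; rewrite inE => /orP[//|xt].
        by move: xN; rewrite inE /= xt /= negbK.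
      move: e; rewrite mE; case: ifP => oxa.
        case: ifP => [/andP[/eqP sx _] _|_ /eqP /hs [_ _ _ yZ2]].
          exact: hdef xZ (eqP oxa) sx.
        by rewrite yZ2 in yZ.
      move=> /andP[Exy yW]; apply/negPn/negP => xA.
      by have := hcl x xZ (negbT oxa) xA y yW Exy; rewrite (negbTE yZ).
  + exact: hcyc cn.
  + move=> aN; apply: t5 cn _.
    apply: (@sub_in_cycle _ N (Kg R (Z :|: t.1) (Defs.merge s t.2 t.1)) _ _ _ aN cc).
    move=> x y /andP[xt xZ] /andP[yt yZ] /and3P[_ _ e].
    rewrite /tgraph xt yt /=.
    have -> : odd (prs pr t.1) = sub_pl pr R by rewrite -tpa.
    move: e; rewrite mE; case: ifP => [_|_ /andP[]//].
    case sxe: (s x) => [y'|]; last by rewrite /= xt; exact: id.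
    by have [xZ' _ _ _] := hs _ _ sxe; rewrite xZ' in xZ.
Qed.

End Pres.

Lemma path_last_P (T : Type) (e : rel T) (P : T -> Prop) x p :
  path e x p -> P x -> (forall a b, e a b -> P b) -> P (last x p).
Proof.
case/lastP: p => [//|p y]; rewrite rcons_path last_rcons => /andP[_ h] _ hb.
exact: hb h.
Qed.

Lemma path_closed (T : Type) (e : rel T) (C : pred T) x p :
  path e x p -> C x -> (forall a b, C a -> e a b -> C b) -> all C p.
Proof.
elim: p x => [//|y p IH] x /= /andP[exy pth] Cx hC.
have Cy := hC _ _ Cx exy; by rewrite Cy (IH y pth Cy hC).
Qed.

Section Extract.
Variables (V : finType) (owner : V -> bool) (E : rel V) (pr : V -> nat).
Variables (R Z : {set V}) (s : strat V).
Hypothesis hI : AInv owner E pr R Z s.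

Local Notation W := (~: R).
Local Notation a := (sub_pl pr R).
Local Notation Y := (core owner E W a s Z).
Local Notation H := (hgraph owner E W a s Y).

Lemma core_prop v : v \in Y ->
  [/\ v \in Z,
      owner v = a -> exists2 w, s v = Some w & w \in Y &
      owner v != a -> forall w, w \in W -> E v w -> w \in Y].
Proof.
move=> vY; have := vY; rewrite /core => /bigcupP [X /andP[XZ clb] vX]; move: clb; rewrite /closed_reg => /forallP cl.
have XY : X \subset Y.
  apply/subsetP=> x xX; rewrite /core; apply/bigcupP; exists X => //; rewrite XZ; exact/forallP.
have := cl v; rewrite vX /= => h.
split; first exact: (subsetP XZ).
- move=> ov; move: h; rewrite ov eqxx; case: (s v) => [w|//] wX; exists w => //; exact: (subsetP XY).
- move=> /negbTE ov; move: h; rewrite ov => /forallP h w wW Evw; apply: (subsetP XY).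
  by have := h w; rewrite wW Evw.
Qed.

Lemma H_Kg : subrel H (Kg owner E pr R Z s).
Proof.
move=> x y /and3P[xY yY e].
have [xZ _ _] := core_prop xY; have [yZ _ _] := core_prop yY.
by rewrite /Kg xZ yZ.
Qed.

Lemma extract_ok t : t \in extract owner E W a s Z ->
  [/\ is_tangle owner E pr t, tpl pr t = a, t.1 \subset Z,
      (forall u, u \in t.1 -> owner u != a -> forall y, y \in W -> E u y -> y \in t.1) &
      (forall u, u \in t.1 -> owner u = a -> exists2 w, s u = Some w & w \in t.1)].
Proof.
case: hI => hZ hA hs hdef hcl hcyc.
move=> /imsetP [C]; rewrite inE => /andP[/andP[/exists_inP [v0 v0C /eqP defC] /forall_inP bot]]
   /exists_inP [x0 x0C /exists_inP [y0 y0C Hx0y0]] ->.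
have b1 : forall x y, x \in C -> H x y -> y \in C.
  by move=> x y xC Hxy; have := bot x xC => /forallP /(_ y); rewrite Hxy.
have b2 : forall x y, x \in C -> y \in C -> connect H x y.
  move=> x y; rewrite defC !inE => /andP[_ h1] /andP[h2 _].
  exact: connect_trans h1 h2.
have x0Y : x0 \in Y by case/and3P: Hx0y0.
have b3 : forall w, w \in C -> w \in Y.
  move=> w wC; have /connectP [p pth ->] := b2 _ _ x0C wC.
  apply: (path_last_P (P := fun z => z \in Y)) pth x0Y _.
  by move=> a' b' /and3P[].
have b4 : forall w, w \in C -> w \in Z by move=> w /b3 /core_prop [].
have b5 : forall u, u \in C -> owner u != a -> forall y, y \in W -> E u y -> y \in C.
  move=> u uC ou y yW Euy; have [_ _ h] := core_prop (b3 _ uC).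
  apply: (b1 u) => //; rewrite /hgraph (b3 _ uC) (h ou y yW Euy) (negbTE ou) Euy yW //.
have b6 : forall u, u \in C -> owner u = a -> exists2 w, s u = Some w & w \in C.
  move=> u uC ou; have [_ h _] := core_prop (b3 _ uC).
  have [w sw wY] := h ou; exists w => //; apply: (b1 u) => //.
  by rewrite /hgraph (b3 _ uC) wY ou eqxx sw /=.
have Cn : 0 < #|C| by apply/card_gt0P; exists x0.
have [m mC mmax] := eq_bigmax_cond pr Cn.
have prsC : prs pr C = pr m by [].
have oddC : odd (prs pr C) = a.
  have /connectP [p1 pth1 l1] := b2 _ _ mC x0C.
  have /connectP [p2 pth2 l2] := b2 _ _ y0C mC.
  set w := p1 ++ y0 :: p2.
  have pw : path H m w by rewrite /w cat_path pth1 -l1 /= Hx0y0 pth2.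
  have lw : last m w = m by rewrite /w last_cat /= -l2.
  have wn : w != [::] by rewrite /w -size_eq0 size_cat /= addnS.
  move: pw lw wn; case/lastP: w => [//|w' z]; rewrite last_rcons => pw zm _; subst z.
  have cc : cycle H (m :: w') by [].
  have allC : all (mem C) (rcons w' m).
    exact: (path_closed (C := mem C)) pw mC b1.
  have cK : cycle (Kg owner E pr R Z s) (m :: w') := sub_cycle H_Kg cc.
  rewrite prsC -(hcyc (m :: w') isT cK).
  congr odd; symmetry; apply: max_eq (mem_head _ _) _ => // y.
  rewrite inE => /orP[/eqP->//|yw].
  rewrite -prsC /prs; apply: (leq_bigmax_cond (P := mem C)).
  by apply: (allP allC); rewrite mem_rcons inE yw orbT.
have tg : forall x y, x \in C -> y \in C -> H x y -> tgraph owner E pr C (restrict s C) x y.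
  move=> x y xC yC /and3P[_ _ e]; rewrite /tgraph xC yC oddC /restrict ffunE xC /=.
  by case: ifP e => // _ /andP[].
split=> //=.
- rewrite /is_tangle /=; split.
  + by apply/set0Pn; exists x0.
  + move=> v vC ov; rewrite oddC in ov; have [w sw wC] := b6 v vC ov.
    exists w; first by rewrite /restrict ffunE vC.
    by have [_ _ Evw _] := hs _ _ sw; rewrite wC Evw.
  + move=> v w; rewrite /restrict ffunE; case: ifP => // vC /hs [_ ov _ _]; by rewrite oddC.
  + move=> u v uC vC; have /connectP [p pth ->] := b2 _ _ uC vC.
    have allp := path_closed (C := mem C) pth uC b1.
    apply/connectP; exists p => //.
    apply: (sub_in_path (P := mem C)) pth.
      by move=> x y xC yC; apply: tg.
    by apply/andP; split.
  + move=> c cn cc; rewrite oddC; apply: hcyc cn _.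
    apply: sub_cycle cc => x y /and3P[xC yC e].
    rewrite /Kg (b4 _ xC) (b4 _ yC) /=; move: e; rewrite oddC /restrict ffunE xC.
    case: ifP => // _ ->; rewrite (subsetP hZ _ (b4 _ yC)) //.
- by apply/subsetP.
Qed.

End Extract.

Section Dom.
Variables (V : finType) (owner : V -> bool) (E : rel V) (pr : V -> nat).

Lemma path_iota (e : rel V) (p : nat -> V) : (forall i, e (p i) (p i.+1)) ->
  forall k s0, path e (p s0) (map p (iota s0.+1 k)).
Proof.
move=> he; elim=> [//|k IH] s0 /=; by rewrite he IH.
Qed.

Definition InfO (p : nat -> V) (v : V) : Prop := forall n, exists2 m, n <= m & p m = v.

Lemma fin_bound (p : nat -> V) : forall l : seq V, exists N, forall v, v \in l -> ~ InfO p v ->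
  forall m, N <= m -> p m <> v.
Proof.
elim=> [|v l [N hN]]; first by exists 0.
case: (classic (InfO p v)) => hv.
  exists N => x; rewrite inE => /orP[/eqP->//|xl]; exact: hN.
have [n hn] : exists n, forall m, n <= m -> p m <> v.
  apply: NNPP => hc; apply: hv => n; apply: NNPP => hc2; apply: hc; exists n => m nm pm.
  by apply: hc2; exists m.
exists (maxn N n) => x; rewrite inE => /orP[/eqP-> _|xl hx] m; rewrite geq_max => /andP[h1 h2].
  exact: hn.
exact: hN.
Qed.

Lemma inf_walk (e : rel V) (p : nat -> V) (b : bool) : (forall i, e (p i) (p i.+1)) ->
  (forall c, c != [::] -> cycle e c -> odd (\max_(v <- c) pr v) = b) -> won_by pr b p.
Proof.
move=> he hc.
have [N hN] := fin_bound p (enum V).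
have infN : forall m, N <= m -> InfO p (p m).
  move=> m Nm; apply: NNPP => hnot; exact: (hN (p m) (mem_enum _ _) hnot m Nm).
pose IB := fun v => if excluded_middle_informative (InfO p v) then true else false.
have IBP : forall v, IB v = true <-> InfO p v.
  by move=> v; rewrite /IB; case: excluded_middle_informative.
have IBn : 0 < #|[pred v | IB v]|.
  apply/card_gt0P; exists (p N); rewrite inE; apply/IBP; exact: infN.
have [vq vqI qdef] := eq_bigmax_cond pr IBn.
set q := \max_(i in _) _ in qdef.
have hle : forall m, N <= m -> pr (p m) <= q.
  move=> m Nm; rewrite /q; apply: (leq_bigmax_cond (P := [pred v | IB v])).
  by rewrite inE; apply/IBP; exact: infN.
have vqInf : InfO p vq by apply/IBP; move: vqI; rewrite inE.
exists (pr vq); split.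
- by move=> n; have [m nm pm] := vqInf n; exists m => //; rewrite pm.
- move=> q' hq'; have [m Nm pm] := hq' N; rewrite -qdef -pm; exact: hle.
- have [m1 Nm1 pm1] := vqInf N.
  have [m2 m12 pm2] := vqInf m1.+1.
  set d := m2 - m1.+1.
  have m2d : m2 = m1.+1 + d by rewrite /d subnKC.
  pose c := p m1 :: map p (iota m1.+1 d).
  have cc : cycle e c.
    rewrite /c /=.
    have -> : rcons (map p (iota m1.+1 d)) (p m1) = map p (iota m1.+1 d.+1).
      by rewrite -[d.+1]addn1 iotaD map_cat /= cats1 -m2d pm2 pm1.
    exact: path_iota.
  rewrite -(hc c isT cc); congr odd; symmetry.
  apply: max_eq (mem_head _ _) _; last by rewrite pm1.
  move=> y; rewrite /c inE => /orP[/eqP->|/mapP [j]]; first by rewrite -qdef; apply: hle.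
  rewrite mem_iota => /andP[j1 _] ->; rewrite -qdef; apply: hle.
  by apply: leq_trans Nm1 (ltnW j1).
Qed.

Lemma tangle_dominion (t : tangle V) : is_tangle owner E pr t ->
  escapes owner E pr setT t = set0 -> dominion owner E pr (tpl pr t) t.1.
Proof.
move=> /(tangleP) [tn t2 t3 t4 t5] esc.
exists t.2; split.
  move=> v w tvw; have [vt ov] := t3 _ _ tvw; split=> //.
  by have [w' tw' /andP[_ E']] := t2 v vt ov; rewrite tvw in tw'; case: tw' => ->.
move=> p hp p0 hcons.
have stay : forall i, p i \in t.1.
  elim=> [//|i IH].
  case: (boolP (owner (p i) == tpl pr t)) => [/eqP oi|oi].
    have [w tw /andP[wt _]] := t2 _ IH oi; by rewrite (hcons i w tw).
  apply/negPn/negP => ni.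
  have : p i.+1 \in escapes owner E pr setT t.
    rewrite /escapes inE in_setT ni /=; apply/existsP; exists (p i).
    by rewrite IH oi hp.
  by rewrite esc inE.
split=> //.
apply: inf_walk t5 => i.
rewrite /tgraph !stay /=.
case: ifP => [/eqP oi|_]; last exact: hp.
have [w tw _] := t2 _ (stay i) oi; by rewrite tw (hcons i w tw).
Qed.

End Dom.

Section Search.
Variables (V : finType) (owner : V -> bool) (E : rel V) (pr : V -> nat).
Hypothesis hE : forall v : V, exists w, E v w.

Definition tangles (T : {set tangle V}) := forall t, t \in T -> is_tangle owner E pr t.

Definition RInv (T : {set tangle V}) (R : {set V}) : Prop :=
  [/\ tangles T, (forall v, v \in ~: R -> exists2 w, w \in ~: R & E v w) &
      (forall t, t \in T -> t.1 \subset ~: R -> escapes owner E pr setT t \subset R ->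
         escapes owner E pr setT t = set0)].

Definition Inv (st : sstate V) : Prop :=
  match st with
  | SLoop T Y R => RInv T R /\ tangles Y /\ (~: R == set0 -> ~~ (Y \subset T))
  | SAttr T Y R Z s => [/\ RInv T R, tangles Y, ~: R != set0 & AInv owner E pr R Z s]
  | SDone _ t => is_tangle owner E pr t /\ dominion owner E pr (tpl pr t) t.1
  end.

Lemma card_ltC (A B : {set V}) x : A \subset B -> x \in B -> x \notin A -> #|~: B| < #|~: A|.
Proof.
move=> AB xB xA; apply: proper_card; apply/properP; split; first by rewrite setCS.
by exists x; rewrite !inE ?xA ?xB.
Qed.

Lemma base_n0 R : ~: R != set0 -> exists v, v \in sub_base pr R.
Proof.
move=> /set0Pn [x xR].
have n0 : 0 < #|~: R| by apply/card_gt0P; exists x.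
have [m mR mm] := eq_bigmax_cond pr n0.
by exists m; rewrite in_base mR /prs mm eqxx.
Qed.

Lemma RInv0 T : tangles T -> RInv T set0.
Proof.
move=> hT; split=> //.
  by move=> v _; have [w Evw] := hE v; exists w; rewrite // setC0 in_setT.
by move=> t _ _; rewrite subset0 => /eqP.
Qed.

Lemma Inv_start T Y R : Inv (SLoop T Y R) -> ~: R != set0 ->
  Inv (SAttr T Y R (sub_base pr R) [ffun=> None]).
Proof.
move=> [hR [hY _]] n0; split=> //; split.
- by apply/subsetP=> x; rewrite in_base => /andP[].
- exact: subxx.
- by move=> x y; rewrite ffunE.
- by [].
- by move=> x xA _ /negP.
- move=> c cn cc; apply: good_has.
    move=> x xc; have := Kg_src cc xc; by rewrite in_base => /andP[].
  case: c cn cc => [//|x c] _ cc; apply/hasP; exists x; first exact: mem_head.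
  exact: Kg_src cc (mem_head x c).
Qed.


Lemma pres_astep T R Z s Z' s' : tangles T -> AInv owner E pr R Z s ->
  astep owner E pr T R (Z, s) (Z', s') -> AInv owner E pr R Z' s'.
Proof.
move=> hT hI h; inversion h; subst.
- exact: pres_pl.
- exact: pres_op.
- move: H3; rewrite inE => /andP[tT tW].
  exact: pres_tg (hT t tT) H4 tW H6.
- exact: pres_base.
Qed.

Lemma astep_dec T R Z s Z' s' : astep owner E pr T R (Z, s) (Z', s') ->
  #|~: Z'| < #|~: Z| \/ (Z' = Z /\ #|[set x | s' x == None]| < #|[set x | s x == None]|).
Proof.
move=> h; inversion h; subst.
- by left; apply: (card_ltC (x := v)); rewrite ?subsetUr ?setU11.
- by left; apply: (card_ltC (x := v)); rewrite ?subsetUr ?setU11.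
- left; move/subsetPn: H7 => [x xt xZ].
  by apply: (card_ltC (x := x)); rewrite ?subsetUl // inE xt orbT.
- right; split=> //; apply: proper_card; apply/properP; split.
    by apply/subsetP=> x; rewrite !inE /upd ffunE; case: (x =P v).
  by exists v; rewrite !inE /upd ?ffunE ?eqxx ?H5.
Qed.


Section Fix.
Variables (T Y : {set tangle V}) (R Z : {set V}) (s : strat V).
Hypothesis hInv : Inv (SAttr T Y R Z s).
Hypothesis hfix : forall zs, ~ astep owner E pr T R (Z, s) zs.

Local Notation a := (sub_pl pr R).

Lemma fix_pl v w : v \in ~: R -> v \notin Z -> owner v = a -> E v w -> w \in Z -> False.
Proof. move=> vR vZ ov Evw wZ; exact: (hfix (AS_pl pr (subT T R) (sub_base pr R) s vR vZ ov Evw wZ)). Qed.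

Lemma fix_op v : v \in ~: R -> v \notin Z -> owner v = ~~ a ->
  (forall w, w \in ~: R -> E v w -> w \in Z) -> False.
Proof. move=> vR vZ ov h; exact: (hfix (AS_op pr (subT T R) (sub_base pr R) s vR vZ ov h)). Qed.

Lemma fix_sub v : v \in ~: (R :|: Z) -> exists2 w, w \in ~: (R :|: Z) & E v w.
Proof.
case: hInv => [[_ hsub _] _ _ hI].
rewrite setCU inE => /andP[vR]; rewrite inE => vZ.
case: (boolP (owner v == a)) => [/eqP ov|ov].
  have [w wR Evw] := hsub v vR; exists w => //.
  rewrite inE wR /=.
  rewrite inE; apply/negP => wZ; exact: fix_pl vR vZ ov Evw wZ.
apply: NNPP => hn; apply: (fix_op vR vZ); first by move: ov; case: (owner v); case: a.
move=> w wR Evw; apply/negPn/negP => wZ; apply: hn; exists w => //.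
by rewrite inE wR inE.
Qed.

Lemma fix_esc t : t \in T -> t.1 \subset ~: (R :|: Z) ->
  escapes owner E pr setT t \subset R :|: Z -> escapes owner E pr setT t = set0.
Proof.
case: hInv => [[hT _ hesc] _ _ hI] tT tRZ escRZ.
have tR : t.1 \subset ~: R.
  by apply: subset_trans tRZ _; rewrite setCU subsetIl.
case: (boolP (escapes owner E pr setT t \subset R)) => [/(hesc t tT tR)//|/subsetPn [e eE eR]].
exfalso.
have eZ : e \in Z by move: (subsetP escRZ e eE); rewrite inE (negbTE eR).
have escW : escapes owner E pr (~: R) t \subset Z.
  apply/subsetP=> x; rewrite /escapes !inE => /andP[xR rest].
  have : x \in escapes owner E pr setT t by rewrite /escapes !inE rest.
  by move/(subsetP escRZ); rewrite inE (negbTE xR).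
have eW : e \in escapes owner E pr (~: R) t.
  by move: eE; rewrite /escapes !inE eR.
move: eE; rewrite /escapes !inE /= => /andP[et /exists_inP [u ut /andP[ou Eue]]].
have [uR uZ] : u \in ~: R /\ u \notin Z.
  by move: (subsetP tRZ u ut); rewrite setCU !inE => /andP[-> ->].
case: (boolP (tpl pr t == a)) => [/eqP ta|ta].
  have tS : t \in subT T R by rewrite /subT inE tT.
  have n0 : escapes owner E pr (~: R) t != set0 by apply/set0Pn; exists e.
  have ns : ~~ (t.1 \subset Z) by apply/subsetPn; exists u.
  exact: (hfix (AS_tg (sub_base pr R) s tS ta n0 escW ns)).
apply: (fix_pl uR uZ _ Eue eZ).
by move: ou ta; case: (owner u); case: (tpl pr t); case: a.
Qed.


Local Notation X := (extract owner E (~: R) a s Z).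
Local Notation Yc := (core owner E (~: R) a s Z).
Local Notation H := (hgraph owner E (~: R) a s Yc).

Lemma fix_new : ~: (R :|: Z) == set0 ->
  (forall t, t \in X -> escapes owner E pr setT t != set0) ->
  exists2 t, t \in X & t \notin T.
Proof.
case: hInv => [[hT hsub hesc] _ n0 hI] /eqP full hX.
have hI' := hI; case: hI' => hZ hA hs hdef hcl hcyc.
have WZ : forall x, x \in ~: R -> x \in Z.
  move=> x xR; apply/negPn/negP => xZ.
  have : x \in ~: (R :|: Z) by rewrite setCU in_setI xR in_setC xZ.
  by rewrite full inE.
have defs : forall v, v \in Z -> owner v = a -> exists2 w, s v = Some w & w \in Z.
  move=> v vZ ov; case sv: (s v) => [w|].
    by exists w => //; have [] := hs _ _ sv.
  exfalso; have vA := hdef v vZ ov sv.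
  have vR : v \in ~: R by apply: (subsetP hZ).
  have [w wR Evw] := hsub v vR.
  exact: (hfix (AS_base pr (subT T R) vA ov sv wR Evw (WZ w wR))).
have ZY : Z \subset Yc.
  apply/subsetP=> x xZ; rewrite /core; apply/bigcupP; exists Z => //.
  rewrite subxx /=; apply/forall_inP => v vZ.
  case: ifP => [/eqP ov|_].
    by have [w -> wZ] := defs v vZ ov.
  by apply/forall_inP => w wR; apply/implyP => _; apply: WZ.
have YZ : forall x, x \in Yc -> x \in Z by move=> x /(@core_prop _ owner E pr R Z s x) [].
have succ : forall v, v \in Z -> exists2 w, w \in Z & H v w.
  move=> v vZ; case: (boolP (owner v == a)) => [/eqP ov|ov].
    have [w sw wZ] := defs v vZ ov; exists w => //.
    by rewrite /hgraph (subsetP ZY _ vZ) (subsetP ZY _ wZ) ov eqxx sw /=.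
  have vR : v \in ~: R by apply: (subsetP hZ).
  have [w wR Evw] := hsub v vR; exists w; first exact: WZ.
  by rewrite /hgraph (subsetP ZY _ vZ) (subsetP ZY _ (WZ _ wR)) (negbTE ov) Evw wR.
have [x0 x0R] : exists x, x \in ~: R by apply/set0Pn.
have x0Z := WZ _ x0R.
pose reach v := [set w | connect H v w].
pose vs := [arg min_(v < x0 in Z) #|reach v|].
have [vsZ vsmin] : vs \in Z /\ forall v, v \in Z -> #|reach vs| <= #|reach v|.
  rewrite /vs; case: arg_minnP => // v vZ hv; split=> //.
have reachZ : forall w, connect H vs w -> w \in Z.
  move=> w /connectP [p pth ->].
  apply: (path_last_P (P := fun z => z \in Z)) pth vsZ _.
  by move=> a' b' /and3P[_ bY _]; apply: YZ.
have back : forall w, connect H vs w -> connect H w vs.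
  move=> w cw.
  have sub : reach w \subset reach vs.
    by apply/subsetP=> z; rewrite !inE => cz; apply: connect_trans cw cz.
  have : reach w == reach vs by rewrite eqEcard sub (vsmin w (reachZ w cw)).
  move/eqP=> ew; have : vs \in reach vs by rewrite inE connect0.
  by rewrite -ew inE.
pose C := [set w | connect H vs w && connect H w vs].
have vsC : vs \in C by rewrite inE connect0.
have botC : forall x y, x \in C -> H x y -> y \in C.
  move=> x y; rewrite inE => /andP[cx _] hxy.
  have cy : connect H vs y by apply: connect_trans cx (connect1 hxy).
  by rewrite inE cy back.
have [y0 y0Z Hy0] := succ vs vsZ.
have CX : (C, restrict s C) \in X.
  apply/imsetP; exists C => //; rewrite inE; apply/andP; split.
    apply/andP; split.
      by apply/exists_inP; exists vs.
    apply/forall_inP => x xC; apply/forallP => y; apply/implyP; exact: botC.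
  apply/exists_inP; exists vs => //; apply/exists_inP; exists y0 => //.
  exact: botC vsC Hy0.
exists (C, restrict s C) => //; apply/negP => CT.
have [_ tpa CZ clo _] := extract_ok hI CX.
have := hX _ CX; rewrite (hesc _ CT) ?eqxx //.
  by apply: subset_trans CZ hZ.
apply/subsetP=> e; rewrite /escapes !inE /= => /andP[eC /exists_inP [u uC /andP[ou Eue]]].
rewrite tpa in ou.
apply/negPn/negP => eR.
have eR' : e \in ~: R by rewrite inE.
by have := clo u uC ou e eR' Eue; rewrite /= inE (negbTE eC).
Qed.

End Fix.


Lemma tangles0 : tangles set0.
Proof. by move=> t; rewrite inE. Qed.

Lemma setC0_n0 : 0 < #|V| -> ~: (set0 : {set V}) != set0.
Proof. move=> hV; rewrite -cardsT card_gt0 in hV; case/set0Pn: hV => x _; apply/set0Pn; exists x; by rewrite !inE. Qed.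

Lemma step_inv (hV : 0 < #|V|) st st' : Inv st -> search_step owner E pr st st' -> Inv st'.
Proof.
move=> hI h; case: h hI.
- by move=> T Y R n0 hI; apply: Inv_start.
- move=> T Y R _ [[hT _ _] [hY _]]; split.
    apply: RInv0 => t; rewrite inE => /orP[]; [exact: hT | exact: hY].
  split; first exact: tangles0.
  by rewrite (negbTE (setC0_n0 hV)).
- move=> T Y R Z s Z' s' ha [hR hY n0 hA]; split=> //.
  by case: hR => hT _ _; apply: pres_astep ha.
- move=> T Y R Z s t _ tX /eqP esc [_ _ _ hA].
  have [tt _ _ _ _] := extract_ok hA tX; split=> //; exact: tangle_dominion.
- move=> T Y R Z s hfix hX hI.
  have hI' := hI; case: hI' => [[hT _ _] hY _ hA].
  split; [split|split].
  + exact: hT.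
  + exact: fix_sub hI hfix.
  + exact: fix_esc hI hfix.
  + move=> t; rewrite inE => /orP[]; [exact: hY | by move/(extract_ok hA) => []].
  + move=> full; have [t tX tT] := fix_new hI hfix full hX.
    apply/negP => /subsetP /(_ t); rewrite inE tX orbT => /(_ isT).
    by rewrite (negbTE tT).
Qed.

End Search.

Section Main.
Variables (V : finType) (owner : V -> bool) (E : rel V) (pr : V -> nat).
Hypothesis hE : forall v : V, exists w, E v w.
Hypothesis hV : 0 < #|V|.

Local Notation step := (search_step owner E pr).
Local Notation rstep := (fun s' s => search_step owner E pr s s').

Lemma done_inv T t st' : ~ step (SDone T t) st'.
Proof. by move=> h; inversion h. Qed.

Lemma loop_inv T Y R st' : step (SLoop T Y R) st' ->
  st' = SAttr T Y R (sub_base pr R) [ffun=> None] \/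
  (~: R == set0 /\ st' = SLoop (T :|: Y) set0 set0).
Proof. by move=> h; inversion h; subst; [left|right]. Qed.

Lemma attr_inv T Y R Z s st' : step (SAttr T Y R Z s) st' ->
  (exists Z' s', astep owner E pr T R (Z, s) (Z', s') /\ st' = SAttr T Y R Z' s') \/
  (exists t, st' = SDone (T :|: Y) t) \/
  st' = SLoop T (Y :|: extract owner E (~: R) (sub_pl pr R) s Z) (R :|: Z).
Proof.
move=> h; inversion h; subst.
- by left; exists Z', s'.
- by right; left; exists t.
- by right; right.
Qed.

Lemma acc_done T t : Acc rstep (SDone T t).
Proof. by constructor => st' /done_inv. Qed.

Lemma acc_all : forall n (T : {set tangle V}), #|~: T| < n ->
  (forall Y R, Inv owner E pr (SLoop T Y R) -> Acc rstep (SLoop T Y R)) /\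
  (forall Y R Z s, Inv owner E pr (SAttr T Y R Z s) -> Acc rstep (SAttr T Y R Z s)).
Proof.
elim=> [//|n IHn] T hn.
have loopR : forall k R, #|~: R| < k ->
  (forall Y, Inv owner E pr (SLoop T Y R) -> Acc rstep (SLoop T Y R)) /\
  (forall Y Z s, Inv owner E pr (SAttr T Y R Z s) -> Acc rstep (SAttr T Y R Z s)).
  elim=> [//|k IHk] R hk.
  have attr : forall Y Z s, Inv owner E pr (SAttr T Y R Z s) -> Acc rstep (SAttr T Y R Z s).
    suff : forall m j (Y : {set tangle V}) (Z : {set V}) (s : strat V), #|~: Z| < m -> #|[set x | s x == None]| < j ->
      Inv owner E pr (SAttr T Y R Z s) -> Acc rstep (SAttr T Y R Z s).
      by move=> h Y Z s; apply: h; apply: ltnSn.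
    elim=> [//|m IHm]; elim=> [//|j IHj] Y Z s hm hj hI.
    constructor => st' h.
    have hI' := step_inv hE hV hI h.
    case: (attr_inv h) => [[Z' [s' [ha e]]]|[[t e]|e]]; subst st'.
    + case: (astep_dec ha) => [lt|[eZ lt]].
        exact: (IHm _ Y Z' s' (leq_trans lt hm) (ltnSn _) hI').
      subst Z'; exact: (IHj Y Z s' hm (leq_trans lt hj) hI').
    + exact: acc_done.
    + have [_ _ n0 hA] := hI.
      have [v vA] := base_n0 pr n0.
      have vZ : v \in Z by apply: (subsetP (ai_A hA)).
      have vR : v \in ~: R by move: vA; rewrite in_base => /andP[].
      have lt : #|~: (R :|: Z)| < #|~: R|.
        apply: (card_ltC (x := v)); first exact: subsetUl.
          by rewrite in_setU vZ orbT.
        by rewrite inE in vR.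
      have hk' : #|~: R| <= k by rewrite -ltnS.
      have [hl _] := IHk (R :|: Z) (leq_trans lt hk').
      exact: hl.
  split; last exact: attr.
  move=> Y hI; constructor => st' h.
  have hI' := step_inv hE hV hI h.
  case: (loop_inv h) => [e|[full e]]; subst st'.
    exact: attr hI'.
  have [_ [_ hnew]] := hI.
  have lt : #|~: (T :|: Y)| < #|~: T|.
    move/subsetPn: (hnew full) => [t tY tT].
    apply: (card_ltC (x := t)); first exact: subsetUl.
      by rewrite in_setU tY orbT.
    exact: tT.
  have hn' : #|~: T| <= n by rewrite -ltnS.
  have [hl _] := IHn (T :|: Y) (leq_trans lt hn').
  exact: hl.
split.
  by move=> Y R; have [h1 _] := loopR _ R (ltnSn _); exact: h1.
by move=> Y R; have [_ h2] := loopR _ R (ltnSn _); exact: h2.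
Qed.

Lemma acc_inv st : Inv owner E pr st -> Acc rstep st.
Proof.
case: st => [T Y R|T Y R Z s|T t] hI.
- by have [h _] := acc_all (ltnSn #|~: T|); exact: h.
- by have [_ h] := acc_all (ltnSn #|~: T|); exact: h.
- exact: acc_done.
Qed.

Lemma progress st : is_done st \/ exists st', step st st'.
Proof.
case: st => [T Y R|T Y R Z s|T t]; [right|right|by left].
- case: (boolP (~: R == set0)) => h.
    by exists (SLoop (T :|: Y) set0 set0); apply: SS_round.
  by eexists; apply: SS_start.
- case: (classic (exists zs, astep owner E pr T R (Z, s) zs)) => [[[Z' s'] ha]|hn].
    by exists (SAttr T Y R Z' s'); apply: SS_attr.
  have hfix : forall zs, ~ astep owner E pr T R (Z, s) zs by move=> zs ha; apply: hn; exists zs.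
  case: (classic (exists2 t, t \in extract owner E (~: R) (sub_pl pr R) s Z &
                     escapes owner E pr setT t == set0)) => [[t tX et]|hn2].
    by exists (SDone (T :|: Y) t); apply: SS_return.
  eexists; apply: SS_next => // t tX; apply/negP => et; apply: hn2; by exists t.
Qed.

Lemma reach_inv x y : clos_refl_trans _ step x y -> Inv owner E pr x -> Inv owner E pr y.
Proof.
elim=> [a b h|a|a b c _ IH1 _ IH2] hI //.
- exact: (@step_inv V owner E pr hE hV a b hI h).
- exact: IH2 (IH1 hI).
Qed.

End Main.

Theorem lemma9_aux (V : finType) (owner : V -> bool) (E : rel V) (pr : V -> nat)
  (hE : forall v : V, exists w, E v w) (hV : 0 < #|V|)
  (T : {set tangle V})
  (hT : forall t, t \in T -> is_tangle owner E pr t) :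
  let s0 := SLoop T set0 set0 in
  Acc (fun s' s => search_step owner E pr s s') s0 /\
  (forall s, clos_refl_trans _ (search_step owner E pr) s0 s ->
     is_done s \/ exists s', search_step owner E pr s s') /\
  (forall T'' t, clos_refl_trans _ (search_step owner E pr) s0 (SDone T'' t) ->
     is_tangle owner E pr t /\ dominion owner E pr (tpl pr t) t.1).
Proof.
move=> s0.
have hI : Inv owner E pr s0.
  split; first exact: RInv0.
  split; first exact: tangles0.
  by rewrite (negbTE (setC0_n0 hV)).
split; first exact: acc_inv hI.
split; first by move=> s _; apply: progress.
move=> T'' t h; exact: (reach_inv hE hV h hI).
Qed.


Unset Implicit Arguments.

Theorem lemma9 (V : finType) (owner : V -> bool) (E : rel V) (pr : V -> nat)
  (hE : forall v : V, exists w, E v w) (hV : 0 < #|V|)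
  (T : {set tangle V})
  (hT : forall t, t \in T -> is_tangle owner E pr t) :
  let s0 := SLoop T set0 set0 in
  (* every run of search(G,T) terminates *)
  Acc (fun s' s => search_step owner E pr s s') s0 /\
  (* no run gets stuck before returning *)
  (forall s, clos_refl_trans _ (search_step owner E pr) s0 s ->
     is_done s \/ exists s', search_step owner E pr s s') /\
  (* every returned (T'', t): t is a tangle and a dominion of pr(t) mod 2 *)
  (forall T'' t, clos_refl_trans _ (search_step owner E pr) s0 (SDone T'' t) ->
     is_tangle owner E pr t /\ dominion owner E pr (tpl pr t) t.1).
Proof. exact: (lemma9_aux hE hV hT). Qed.
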